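(* Let $L_{\mathcal{F}}$ and $L_{\mathcal{R}}$ be Lipschitz constants of $\mathcal{F}$ and $\mathcal{R}$ over $\Omega_\theta$, and suppose $\beta>L_{\mathcal{F}}+L_{\mathcal{R}}$. If $\bar z\in\Omega_\theta$ is a local minimizer of problem (R) or of problem (LRP), then $\bar z$ is also a local minimizer of problem (RP). If $\bar z\in\Omega_\theta\cap\Omega_3$ is a local minimizer of problem (RP), then $\bar z$ is also a local minimizer of problem (LRP).
   Context: Let $N,N_0,N_1$ be positive integers, $X=(x_1,\ldots,x_N)\in\mathbb{R}^{N_0\times N}$ a given data matrix, and $\lambda_1,\lambda_2,\beta>0$ given parameters. For a real vector $y$, $(y)_+=\max\{y,0\}$ componentwise; $e$ denotes the all-ones vector of $\mathbb{R}^{N_1}$. For a matrix $Y$, $\|Y\|_F$ is the Frobenius norm and $\|Y\|_1$ the maximum absolute column sum. The variable is $z=(\mathrm{vec}(W)^\top,b^\top,\mathrm{vec}(V)^\top)^\top\in\mathbb{R}^{N_2}$, $N_2=N_0N_1+N_1+N_0+N_1N$, where $W\in\mathbb{R}^{N_1\times N_0}$, $b=(b_1^\top,b_2^\top)^\top$ with $b_1\in\mathbb{R}^{N_1}$, $b_2\in\mathbb{R}^{N_0}$, $V=(v_1,\ldots,v_N)\in\mathbb{R}^{N_1\times N}$, and vec is columnwise vectorization. Define $\mathcal{F}(z)=\frac1N\sum_{n=1}^N\|(W^\top v_n+b_2)_+-x_n\|_2^2$, $\mathcal{R}(z)=\lambda_1\sum_{n=1}^N e^\top v_n+\lambda_2\|W\|_F^2$,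 $\mathcal{P}(z)=\beta\sum_{n=1}^N e^\top(v_n-(Wx_n+b_1)_+)$, and $\mathcal{O}=\mathcal{F}+\mathcal{R}+\mathcal{P}$. Let $\Omega_1=\{z: v_n=(Wx_n+b_1)_+,\ n=1,\ldots,N\}$, $\Omega_2=\{z: v_n\ge (Wx_n+b_1)_+,\ n=1,\ldots,N\}$. Fix $\theta>\frac1N\|X\|_F^2$ and set $\alpha=\max\left\{\frac{\theta}{\lambda_1}+\sqrt{\frac{N_1N_0\theta}{\lambda_2}}\|X\|_1,\ \frac{\theta\sqrt{N_1N_0\theta}}{\lambda_1\sqrt{\lambda_2}}+\sqrt{N\theta}+\|X\|_1\right\}$. Let $\Omega_3=\{z:\|b\|_\infty\le\alpha\}$, $\mathcal{Z}=\Omega_2\cap\Omega_3$, $\Omega_\theta=\{z\in\Omega_2:\mathcal{O}(z)\le\theta\}$. Problem (R): minimize $\mathcal{F}(z)+\mathcal{R}(z)$ subject to $z\in\Omega_1$. Problem (RP): minimize $\mathcal{O}(z)$ subject to $z\in\Omega_2$. Problem (LRP): minimize $\mathcal{O}(z)$ subject to $z\in\mathcal{Z}$. *)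

(* Defs.v *)
From HB Require Import structures.
From mathcomp Require Import all_boot all_order all_algebra.
From mathcomp Require Import reals.
Set Implicit Arguments. Unset Strict Implicit. Unset Printing Implicit Defensive.
Import Order.TTheory GRing.Theory Num.Theory.
Local Open Scope ring_scope.

Section Defs.
Variables (R : realType) (N N0 N1 : nat).

(* The variable z = (vec W, b = (b1;b2), vec V). *)
Record param := Param {
  pW  : 'M[R]_(N1, N0);
  pb1 : 'cV[R]_N1;
  pb2 : 'cV[R]_N0;
  pV  : 'M[R]_(N1, N) }.

Definition relu (x : R) : R := Num.max x 0.

Definition frob2 m n (A : 'M[R]_(m, n)) : R := \sum_(i < m) \sum_(j < n) A i j ^+ 2.

Definition pdist (z z' : param) : R :=
  Num.sqrt (frob2 (pW z - pW z') + frob2 (pb1 z - pb1 z')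
          + frob2 (pb2 z - pb2 z') + frob2 (pV z - pV z')).

Definition mnorm1 (X : 'M[R]_(N0, N)) : R :=
  \big[Num.max/0]_(n < N) \sum_(i < N0) `|X i n|.

Variables (X : 'M[R]_(N0, N)) (lam1 lam2 beta : R).

Definition objF (z : param) : R :=
  N%:R^-1 * \sum_(n < N) \sum_(i < N0)
     (relu (((pW z)^T *m pV z) i n + pb2 z i 0) - X i n) ^+ 2.

Definition objR (z : param) : R :=
  lam1 * \sum_(n < N) \sum_(j < N1) pV z j n + lam2 * frob2 (pW z).

Definition objP (z : param) : R :=
  beta * \sum_(n < N) \sum_(j < N1)
     (pV z j n - relu ((pW z *m X) j n + pb1 z j 0)).

Definition objO (z : param) : R := objF z + objR z + objP z.

Definition Omega1 (z : param) : Prop :=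
  forall (n : 'I_N) (j : 'I_N1), pV z j n = relu ((pW z *m X) j n + pb1 z j 0).

Definition Omega2 (z : param) : Prop :=
  forall (n : 'I_N) (j : 'I_N1), relu ((pW z *m X) j n + pb1 z j 0) <= pV z j n.

Variable theta : R.

Definition alpha : R :=
  Num.max (theta / lam1 + Num.sqrt ((N1 * N0)%:R * theta / lam2) * mnorm1 X)
          (theta * Num.sqrt ((N1 * N0)%:R * theta) / (lam1 * Num.sqrt lam2)
           + Num.sqrt (N%:R * theta) + mnorm1 X).

Definition Omega3 (z : param) : Prop :=
  (forall j : 'I_N1, `|pb1 z j 0| <= alpha) /\ (forall i : 'I_N0, `|pb2 z i 0| <= alpha).

Definition Zset (z : param) : Prop := Omega2 z /\ Omega3 z.

Definition Omega_theta (z : param) : Prop := Omega2 z /\ objO z <= theta.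

End Defs.

Definition local_min (R : realType) (N N0 N1 : nat)
  (f : param R N N0 N1 -> R) (S : param R N N0 N1 -> Prop) (zb : param R N N0 N1) : Prop :=
  S zb /\ exists eps : R, 0 < eps /\
    forall z, S z -> pdist z zb < eps -> f zb <= f z.

Definition lipschitz_on (R : realType) (N N0 N1 : nat)
  (f : param R N N0 N1 -> R) (S : param R N N0 N1 -> Prop) (L : R) : Prop :=
  0 <= L /\ forall z z', S z -> S z' -> `|f z - f z'| <= L * pdist z z'.

(* Main.v *)
Require Import Defs.
From HB Require Import structures.
From mathcomp Require Import all_boot all_order all_algebra.
From mathcomp Require Import classical_sets reals.
From mathcomp Require Import ring lra.
Import Order.TTheory GRing.Theory Num.Theory.
Local Open Scope ring_scope.
Set Implicit Arguments. Unset Strict Implicit. Unset Printing Implicit Defensive.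

Section Helpers.
Variable R : realType.

Lemma relu_ge0 (x : R) : 0 <= relu x.
Proof. by rewrite /relu le_max lexx orbT. Qed.
Lemma relu_ge (x : R) : x <= relu x.
Proof. by rewrite /relu le_max lexx. Qed.
Lemma relu_neg (x : R) : x <= 0 -> relu x = 0.
Proof. by move=> h; rewrite /relu max_r. Qed.
Lemma relu_pos (x : R) : 0 <= x -> relu x = x.
Proof. by move=> h; rewrite /relu max_l. Qed.
Lemma relu_lip (a b : R) : `|relu a - relu b| <= `|a - b|.
Proof.
rewrite /relu; case: (leP a 0) => ha; case: (leP b 0) => hb.
- by rewrite subrr normr0.
- rewrite sub0r normrN (gtr0_norm hb) distrC; apply: (le_trans _ (ler_norm _)); lra.
- rewrite subr0 (gtr0_norm ha); apply: (le_trans _ (ler_norm _)); lra.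
- by [].
Qed.

Lemma sum_ge_term (I : finType) (F : I -> R) i :
  (forall j, 0 <= F j) -> F i <= \sum_j F j.
Proof.
move=> h; rewrite (bigD1 i) //= lerDl; apply: sumr_ge0 => j _; exact: h.
Qed.

Definition lipI (f : R -> R) := exists K, 0 <= K /\
  forall t s, 0 <= t <= 1 -> 0 <= s <= 1 -> `|f t - f s| <= K * `|t - s|.

Lemma lipI_ext f g : (forall t, f t = g t) -> lipI g -> lipI f.
Proof. by move=> e [K [K0 h]]; exists K; split=> // t s ht hs; rewrite !e; apply: h. Qed.

Lemma lipI_const c : lipI (fun _ => c).
Proof. by exists 0; split=> // t s _ _; rewrite subrr normr0 mul0r. Qed.

Lemma lipI_add f g : lipI f -> lipI g -> lipI (fun t => f t + g t).
Proof.
move=> [K [K0 hK]] [L [L0 hL]]; exists (K + L); split; first exact: addr_ge0.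
move=> t s ht hs; have := hK t s ht hs; have := hL t s ht hs.
have := ler_normD (f t - f s) (g t - g s).
have -> : f t + g t - (f s + g s) = (f t - f s) + (g t - g s) by ring.
move=> h1 h2 h3; rewrite mulrDl; apply: (le_trans h1); exact: lerD.
Qed.

Lemma lipI_scale c f : lipI f -> lipI (fun t => c * f t).
Proof.
move=> [K [K0 hK]]; exists (`|c| * K); split; first by rewrite mulr_ge0.
move=> t s ht hs; rewrite -mulrBr normrM -mulrA ler_wpM2l //; exact: hK.
Qed.

Lemma lipI_sum n (F : 'I_n -> R -> R) : (forall i, lipI (F i)) ->
  lipI (fun t => \sum_(i < n) F i t).
Proof.
move=> h; have [K hK] := fin_all_exists h.
exists (\sum_i K i); split; first by apply: sumr_ge0 => i _; case: (hK i).
move=> t s ht hs; rewrite -sumrB mulr_suml.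
apply: (le_trans (ler_norm_sum _ _ _)); apply: ler_sum => i _.
by case: (hK i) => _ ; apply.
Qed.

Lemma lipI_lin a c : lipI (fun t => a + t * c).
Proof.
exists `|c|; split => // t s _ _.
have -> : a + t * c - (a + s * c) = (t - s) * c by ring.
by rewrite normrM mulrC.
Qed.

Lemma lipI_sq a c x : lipI (fun t => (relu (a + t * c) - x) ^+ 2).
Proof.
exists (2 * (`|a| + `|c| + `|x|) * `|c|); split.
  by rewrite !mulr_ge0 // !addr_ge0.
move=> t s /andP[t0 t1] /andP[s0 s1].
set p := relu (a + t * c) - x; set q := relu (a + s * c) - x.
have -> : p ^+ 2 - q ^+ 2 = (p + q) * (p - q) by rewrite /p /q; ring.
rewrite normrM.
have hpq : `|p - q| <= `|c| * `|t - s|.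
  have -> : p - q = relu (a + t * c) - relu (a + s * c) by rewrite /p /q; ring.
  apply: (le_trans (relu_lip _ _)).
  have -> : a + t * c - (a + s * c) = (t - s) * c by ring.
  by rewrite normrM mulrC.
have hr : forall u, 0 <= u <= 1 -> `|relu (a + u * c) - x| <= `|a| + `|c| + `|x|.
  move=> u /andP[u0 u1].
  apply: (le_trans (ler_normB _ _)); apply: lerD => //.
  have h1 : `|relu (a + u * c)| <= `|a + u * c|.
    have := relu_lip (a + u * c) 0; rewrite /relu maxxx subr0 subr0.
    by rewrite /relu.
  apply: (le_trans h1); apply: (le_trans (ler_normD _ _)); apply: lerD => //.
  rewrite normrM -[leRHS]mul1r ler_wpM2r //; rewrite ger0_norm //.
have hpq2 : `|p + q| <= 2 * (`|a| + `|c| + `|x|).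
  apply: (le_trans (ler_normD _ _)); rewrite mulr2n mulrDl mul1r.
  by apply: lerD; apply: hr; apply/andP.
apply: le_trans (ler_pM (normr_ge0 _) (normr_ge0 _) hpq2 hpq) _.
by rewrite !mulrA.
Qed.

End Helpers.
Arguments sum_ge_term {R I} F i _.

Section SupArg.
Variable R : realType.

Lemma sup_arg (g : R -> R) (th Oz : R) : lipI g -> g 1 = Oz -> Oz <= th ->
  (forall t, 0 <= t <= 1 -> g t <= th -> g t <= Oz) -> g 0 <= th \/ th <= Oz.
Proof.
move=> [K [K0 hK]] g1 hOz hgt.
case: (leP (g 0) th) => h0; [by left | right].
rewrite leNgt; apply/negP => hlt.
pose A : set R := fun t => 0 <= t <= 1 /\ th < g t.
have A0 : A 0 by split => //; rewrite lexx ler01.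
have hs : has_sup A.
  split; first by exists 0.
  by exists 1 => x [/andP[_ ?] _].
have ub := sup_upper_bound hs.
set t0 := sup A.
have t0ge : 0 <= t0 by apply: ub.
have t0le : t0 <= 1 by apply: ge_sup; [exists 0 | move=> x [/andP[_ ?] _]].
set gap := th - Oz.
have gap0 : 0 < gap by rewrite subr_gt0.
set d := gap / (2 * K + 2).
have d0 : 0 < d by rewrite divr_gt0 //; lra.
have Kd : 2 * K * d < gap.
  rewrite /d mulrA ltr_pdivrMr; last by lra.
  have -> : gap * (2 * K + 2) = 2 * K * gap + 2 * gap by ring.
  rewrite ltrDl; apply: mulr_gt0 => //.
have egap : gap = th - Oz by [].
clearbody d gap.
have [a [/andP[a0 a1] ga] ha] := sup_adherent d0 hs.
rewrite -/t0 in ha.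
have at0 : a <= t0.
  apply: (ub a); split => //; exact/andP.
have key : forall s, 0 <= s <= 1 -> a <= s -> s - a <= 2 * d -> g s <= Oz -> False.
  move=> s hs1 sa sad gs.
  have := hK a s (introT andP (conj a0 a1)) hs1.
  rewrite ler_norml => /andP[h1 h2].
  have : `|a - s| <= 2 * d by rewrite distrC ger0_norm ?subr_ge0.
  move=> h3.
  have : K * `|a - s| <= 2 * K * d.
    have -> : 2 * K * d = K * (2 * d) by ring.
    by apply: ler_wpM2l.
  lra.
case: (leP (t0 + d) 1) => ht.
  apply: (key (t0 + d)).
  - apply/andP; split => //; lra.
  - lra.
  - lra.
  - apply: hgt; first by apply/andP; split => //; lra.
    rewrite leNgt; apply/negP => hlt2.
    have : t0 + d <= t0 by apply: ub; split => //; apply/andP; split => //; lra.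
    lra.
apply: (key 1).
- by rewrite ler01 lexx.
- by [].
- lra.
- by rewrite g1.
Qed.

End SupArg.

Section Main.
Variables (R : realType) (N N0 N1 : nat) (X : 'M[R]_(N0, N)) (lam1 lam2 beta theta : R).
Hypotheses (N_gt0 : (0 < N)%N) (N0_gt0 : (0 < N0)%N) (N1_gt0 : (0 < N1)%N)
  (l1 : 0 < lam1) (l2 : 0 < lam2) (b0 : 0 < beta) (hth : N%:R^-1 * frob2 X < theta).

Local Notation P := (param R N N0 N1).
Local Notation O := (objO X lam1 lam2 beta).
Local Notation FF := (objF X).
Local Notation RR := (@objR R N N0 N1 lam1 lam2).
Local Notation PP := (objP X beta).
Local Notation M := (mnorm1 X).
Let w := Num.sqrt (theta / lam2).

Lemma frob2_ge0 m n (A : 'M[R]_(m, n)) : 0 <= frob2 A.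
Proof. by apply: sumr_ge0 => i _; apply: sumr_ge0 => j _; rewrite sqr_ge0. Qed.

Lemma frob2_entry m n (A : 'M[R]_(m, n)) i j : A i j ^+ 2 <= frob2 A.
Proof.
apply: (@le_trans _ _ (\sum_j A i j ^+ 2)).
  by apply: (sum_ge_term (fun j => A i j ^+ 2)) => k; rewrite sqr_ge0.
apply: (sum_ge_term (fun i => \sum_j A i j ^+ 2)) => k.
by apply: sumr_ge0 => l _; rewrite sqr_ge0.
Qed.

Lemma theta_gt0 : 0 < theta.
Proof. apply: le_lt_trans hth; rewrite mulr_ge0 ?frob2_ge0 // invr_ge0 ler0n //. Qed.

Lemma V_ge0 (z : P) n j : Omega2 X z -> 0 <= pV z j n.
Proof. by move=> h; apply: le_trans (h n j); apply: relu_ge0. Qed.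

Lemma F_ge0 (z : P) : 0 <= FF z.
Proof.
rewrite /objF; apply: mulr_ge0; first by rewrite invr_ge0 ler0n.
by apply: sumr_ge0 => i _; apply: sumr_ge0 => j _; rewrite sqr_ge0.
Qed.

Lemma P_ge0 (z : P) : Omega2 X z -> 0 <= PP z.
Proof.
move=> h; rewrite /objP; apply: mulr_ge0; first exact: ltW.
by apply: sumr_ge0 => n _; apply: sumr_ge0 => j _; rewrite subr_ge0 h.
Qed.

Lemma sumV_ge0 (z : P) : Omega2 X z -> 0 <= \sum_(n < N) \sum_(j < N1) pV z j n.
Proof. by move=> h; apply: sumr_ge0 => n _; apply: sumr_ge0 => j _; apply: V_ge0. Qed.

Lemma bounds (z : P) : Omega2 X z -> O z <= theta ->
  [/\ FF z <= theta, lam1 * \sum_(n < N) \sum_(j < N1) pV z j n <= theta,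
      lam2 * frob2 (pW z) <= theta & RR z <= theta].
Proof.
move=> h hO; move: hO; rewrite /objO /objR.
have := F_ge0 z; have := P_ge0 h; have := sumV_ge0 h; have := frob2_ge0 (pW z).
move=> a b c d e.
have a' := mulr_ge0 (ltW l2) a; have b' := mulr_ge0 (ltW l1) b.
split; lra.
Qed.

Lemma W_bound (z : P) j i : Omega2 X z -> O z <= theta -> `|pW z j i| <= w.
Proof.
move=> h hO; have [_ _ hW _] := bounds h hO.
rewrite -sqrtr_sqr /w; apply: ler_wsqrtr.
rewrite ler_pdivlMr //; apply: le_trans hW; rewrite mulrC.
by apply: ler_wpM2l; [exact: ltW | exact: frob2_entry].
Qed.

Lemma w_ge0 : 0 <= w. Proof. exact: sqrtr_ge0. Qed.

Lemma Vcol_bound (z : P) n : Omega2 X z -> O z <= theta ->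
  \sum_(j < N1) pV z j n <= theta / lam1.
Proof.
move=> h hO; have [_ hV _ _] := bounds h hO.
rewrite ler_pdivlMr // mulrC; apply: le_trans hV; apply: ler_wpM2l; first exact: ltW.
apply: (sum_ge_term (fun n => \sum_(j < N1) pV z j n)) => k.
by apply: sumr_ge0 => j _; apply: V_ge0.
Qed.

Lemma V_bound (z : P) n j : Omega2 X z -> O z <= theta -> pV z j n <= theta / lam1.
Proof.
move=> h hO; apply: le_trans (Vcol_bound n h hO).
by apply: (sum_ge_term (fun j => pV z j n)) => k; apply: V_ge0.
Qed.

Lemma X_bound i n : `|X i n| <= M.
Proof.
apply: le_trans (le_bigmax _ (fun n => \sum_(i < N0) `|X i n|) n).
by apply: (sum_ge_term (fun i => `|X i n|)) => k.
Qed.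

Lemma colX_bound n : \sum_(i < N0) `|X i n| <= M.
Proof. exact: (le_bigmax _ (fun n => \sum_(i < N0) `|X i n|) n). Qed.

Lemma WX_bound (z : P) j n : Omega2 X z -> O z <= theta ->
  `|(pW z *m X) j n| <= w * M.
Proof.
move=> h hO; rewrite mxE; apply: (le_trans (ler_norm_sum _ _ _)).
apply: le_trans (_ : \sum_i w * `|X i n| <= _).
  by apply: ler_sum => i _; rewrite normrM ler_wpM2r // W_bound.
by rewrite -mulr_sumr ler_wpM2l ?w_ge0 // colX_bound.
Qed.

Lemma WV_bound (z : P) i n : Omega2 X z -> O z <= theta ->
  `|((pW z)^T *m pV z) i n| <= w * (theta / lam1).
Proof.
move=> h hO; rewrite mxE; apply: (le_trans (ler_norm_sum _ _ _)).
apply: le_trans (_ : \sum_j w * pV z j n <= _).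
  apply: ler_sum => j _; rewrite mxE normrM (ger0_norm (V_ge0 _ _ h)).
  by rewrite ler_wpM2r ?W_bound ?(V_ge0 _ _ h).
by rewrite -mulr_sumr ler_wpM2l ?w_ge0 // Vcol_bound.
Qed.


Local Notation al := (alpha N1 X lam1 lam2 theta).

Lemma M_ge0 : 0 <= M.
Proof. apply: le_trans (colX_bound (Ordinal N_gt0)); exact: sumr_ge0. Qed.

Lemma b1_upper (z : P) j : Omega2 X z -> O z <= theta ->
  pb1 z j 0 <= theta / lam1 + w * M.
Proof.
move=> h hO; set n0 := Ordinal N_gt0.
have h1 := h n0 j; have h2 := relu_ge ((pW z *m X) j n0 + pb1 z j 0).
have h3 := V_bound n0 j h hO; have := WX_bound j n0 h hO.
rewrite ler_norml => /andP[h4 h5]; lra.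
Qed.

Lemma b2_upper (z : P) i : Omega2 X z -> O z <= theta ->
  pb2 z i 0 <= M + Num.sqrt (N%:R * theta) + w * (theta / lam1).
Proof.
move=> h hO; set n0 := Ordinal N_gt0.
have [hF _ _ _] := bounds h hO.
set u := ((pW z)^T *m pV z) i n0.
have ht : (relu (u + pb2 z i 0) - X i n0) ^+ 2 <= N%:R * theta.
  have N0' : 0 < N%:R :> R by rewrite ltr0n.
  have hS : forall S : R, N%:R^-1 * S <= theta -> S <= N%:R * theta.
    move=> S hS; have -> : S = N%:R * (N%:R^-1 * S).
      by rewrite mulrA divff ?mul1r // gt_eqF.
    by apply: ler_wpM2l => //; apply: ltW.
  move: hF; rewrite /objF => /hS; apply: le_trans.
  apply: (@le_trans _ _ (\sum_(i0 < N0) (relu (((pW z)^T *m pV z) i0 n0 + pb2 z i0 0) - X i0 n0) ^+ 2)).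
    by apply: (sum_ge_term (fun i0 => (relu (((pW z)^T *m pV z) i0 n0 + pb2 z i0 0) - X i0 n0) ^+ 2)) => k; rewrite sqr_ge0.
  apply: (sum_ge_term (fun n => \sum_(i0 < N0) (relu (((pW z)^T *m pV z) i0 n + pb2 z i0 0) - X i0 n) ^+ 2)) => k.
  by apply: sumr_ge0 => l _; rewrite sqr_ge0.
have hs : relu (u + pb2 z i 0) - X i n0 <= Num.sqrt (N%:R * theta).
  apply: le_trans (ler_norm _) _; rewrite -sqrtr_sqr; exact: ler_wsqrtr.
have h2 := relu_ge (u + pb2 z i 0).
have := WV_bound i n0 h hO; rewrite -/u ler_norml => /andP[h4 h5].
have := X_bound i n0; rewrite ler_norml => /andP[h6 h7].
lra.
Qed.

Let k := (N1 * N0)%:R : R.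

Lemma k_ge1 : 1 <= k.
Proof. by rewrite /k ler1n muln_gt0 N1_gt0 N0_gt0. Qed.

Lemma w_le : w <= Num.sqrt (k * theta / lam2).
Proof.
apply: ler_wsqrtr; rewrite -mulrA; apply: ler_peMl => //.
  by rewrite mulr_ge0 ?invr_ge0 ?ltW // theta_gt0.
exact: k_ge1.
Qed.

Lemma alpha_b1 : theta / lam1 + w * M <= al /\ w * M < al.
Proof.
have h : theta / lam1 + w * M <= al.
  rewrite /alpha le_max; apply/orP; left.
  by rewrite lerD2l ler_wpM2r ?M_ge0 // w_le.
split=> //; apply: lt_le_trans h; by rewrite ltrDr divr_gt0 // theta_gt0.
Qed.

Lemma alpha_b2 : M + Num.sqrt (N%:R * theta) + w * (theta / lam1) <= al
  /\ w * (theta / lam1) < al.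
Proof.
have th := theta_gt0.
have sN : 0 < Num.sqrt (N%:R * theta) by rewrite sqrtr_gt0 mulr_gt0 // ltr0n.
have s2 : 0 < Num.sqrt lam2 by rewrite sqrtr_gt0.
have hw : w * (theta / lam1) <= theta * Num.sqrt (k * theta) / (lam1 * Num.sqrt lam2).
  rewrite /w sqrtrM ?(ltW th) // sqrtrV ?(ltW l2) //.
  have -> : theta * Num.sqrt (k * theta) / (lam1 * Num.sqrt lam2)
      = Num.sqrt (k * theta) * (Num.sqrt lam2)^-1 * (theta / lam1).
    by rewrite invfM; ring.
  rewrite ler_pM2r ?divr_gt0 // ler_pM2r ?invr_gt0 //.
  apply: ler_wsqrtr; apply: ler_peMl => //; [exact: ltW | exact: k_ge1].
have h : M + Num.sqrt (N%:R * theta) + w * (theta / lam1) <= al.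
  rewrite /alpha le_max; apply/orP; right; rewrite -/k; lra.
split=> //; apply: lt_le_trans h; have := M_ge0; lra.
Qed.

Lemma al_ge0 : 0 <= al.
Proof. have [_ h] := alpha_b1; apply: le_trans (ltW h); rewrite mulr_ge0 ?w_ge0 ?M_ge0 //. Qed.

Lemma relu_clamp (u b a : R) : u < a -> relu (u + Num.max b (- a)) = relu (u + b).
Proof.
move=> h; case: (leP b (-a)) => hb.
  by rewrite !relu_neg //; lra.
by [].
Qed.

Lemma mapE (f : R -> R) m n (A : 'M[R]_(m,n)) i j : (map_mx f A) i j = f (A i j).
Proof. by rewrite mxE. Qed.

Definition clampz (z : P) : P :=
  Param (pW z) (map_mx (fun x => Num.max x (- al)) (pb1 z))
        (map_mx (fun x => Num.max x (- al)) (pb2 z)) (pV z).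

Lemma clamp_props (z : P) : Omega2 X z -> O z <= theta ->
  [/\ Omega2 X (clampz z), Omega3 X lam1 lam2 theta (clampz z) & O (clampz z) = O z].
Proof.
move=> h hO.
have hWX n j : (pW z *m X) j n < al.
  have := WX_bound j n h hO; rewrite ler_norml => /andP[_ h1].
  have [_ h2] := alpha_b1; lra.
have hWV i n : ((pW z)^T *m pV z) i n < al.
  have := WV_bound i n h hO; rewrite ler_norml => /andP[_ h1].
  have [_ h2] := alpha_b2; lra.
split.
- move=> n j; rewrite /clampz /= mapE relu_clamp //; exact: h.
- split=> [j|i]; rewrite /clampz /= mapE ler_norml; apply/andP; split.
  + by rewrite le_max lexx orbT.
  + rewrite ge_max; apply/andP; split; last by have := al_ge0; lra.
    apply: le_trans (b1_upper j h hO) _; have [h1 _] := alpha_b1; lra.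
  + by rewrite le_max lexx orbT.
  + rewrite ge_max; apply/andP; split; last by have := al_ge0; lra.
    apply: le_trans (b2_upper i h hO) _; have [h1 _] := alpha_b2; lra.
- rewrite /objO; congr (_ + _ + _).
    rewrite /objF /clampz /=; congr (_ * _); apply: eq_bigr => n _; apply: eq_bigr => i _.
    by rewrite mapE relu_clamp.
  rewrite /objP /clampz /=; congr (_ * _); apply: eq_bigr => n _; apply: eq_bigr => j _.
  by rewrite mapE relu_clamp.
Qed.

Lemma clamp_sq (b bb a : R) : `|bb| <= a ->
  (Num.max b (- a) - bb) ^+ 2 <= (b - bb) ^+ 2.
Proof.
rewrite ler_norml => /andP[h1 h2]; case: (leP b (-a)) => hb.
  nra.
by [].
Qed.

Lemma clamp_dist (z zb : P) : Omega3 X lam1 lam2 theta zb ->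
  pdist (clampz z) zb <= pdist z zb.
Proof.
move=> [h1 h2]; rewrite /pdist /clampz /=; apply: ler_wsqrtr.
apply: lerD; last by [].
apply: lerD; last first.
  apply: ler_sum => i _; apply: ler_sum => j _; rewrite !mxE.
  by rewrite (ord1 j); apply: clamp_sq.
apply: lerD => //.
apply: ler_sum => i _; apply: ler_sum => j _; rewrite !mxE.
by rewrite (ord1 j); apply: clamp_sq.
Qed.

Lemma part_LRP (zb : P) : Omega_theta X lam1 lam2 beta theta zb ->
  local_min O (Zset X lam1 lam2 theta) zb -> local_min O (Omega2 X) zb.
Proof.
move=> [hb2 hbO] [[_ hZ3] [eps [e0 he]]]; split=> //; exists eps; split=> //.
move=> z hz hd; case: (leP (O z) theta) => hOz; last first.
  by apply: le_trans hbO (ltW hOz).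
have [c2 c3 ce] := clamp_props hz hOz.
rewrite -ce; apply: he; first by split.
exact: le_lt_trans (clamp_dist z hZ3) hd.
Qed.


Lemma mxsubE m n (A B : 'M[R]_(m, n)) i j : (A - B) i j = A i j - B i j.
Proof. by rewrite !mxE. Qed.

Lemma entry_lin m n (A B : 'M[R]_(m, n)) (t : R) i j : (A + t *: B) i j = A i j + t * B i j.
Proof. by rewrite !mxE. Qed.

Lemma sum_const_ord n (c : R) : \sum_(i < n) c = n%:R * c.
Proof. by rewrite sumr_const card_ord mulr_natl. Qed.

Lemma frob2_0 m n : frob2 (0 : 'M[R]_(m, n)) = 0.
Proof. by rewrite /frob2 big1 // => i _; rewrite big1 // => j _; rewrite mxE expr0n. Qed.

Definition Vp (z : P) : 'M[R]_(N1, N) := \matrix_(j, n) relu ((pW z *m X) j n + pb1 z j 0).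

Lemma VpE (z : P) j n : Vp z j n = relu ((pW z *m X) j n + pb1 z j 0).
Proof. by rewrite /Vp mxE. Qed.

Definition proj (z : P) : P := Param (pW z) (pb1 z) (pb2 z) (Vp z).
Definition zt (z : P) (t : R) : P :=
  Param (pW z) (pb1 z) (pb2 z) (Vp z + t *: (pV z - Vp z)).

Lemma proj_Omega1 (z : P) : Omega1 X (proj z).
Proof. by move=> n j; rewrite /= VpE. Qed.

Lemma P_Omega1 (z : P) : Omega1 X z -> PP z = 0.
Proof.
move=> h; rewrite /objP big1 ?mulr0 // => n _; rewrite big1 // => j _.
by rewrite (h n j) subrr.
Qed.

Lemma D_ge0 (z : P) n j : Omega2 X z -> 0 <= (pV z - Vp z) j n.
Proof. by move=> h; rewrite mxsubE VpE subr_ge0; exact: h. Qed.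

Lemma zt_Omega2 (z : P) t : Omega2 X z -> 0 <= t -> Omega2 X (zt z t).
Proof.
move=> h t0 n j; rewrite /zt /= entry_lin -VpE lerDl.
by apply: mulr_ge0 => //; apply: D_ge0.
Qed.

Lemma zt1 (z : P) : zt z 1 = z.
Proof. by case: z => W b1 b2 V; rewrite /zt /=; congr Param; rewrite scale1r addrC subrK. Qed.

Lemma zt0 (z : P) : zt z 0 = proj z.
Proof. by rewrite /zt /proj scale0r addr0. Qed.

Lemma P_zt (z : P) t : PP (zt z t) = beta * (t * \sum_(n < N) \sum_(j < N1) (pV z - Vp z) j n).
Proof.
rewrite /objP /zt /=; congr (_ * _); rewrite mulr_sumr; apply: eq_bigr => n _.
rewrite mulr_sumr; apply: eq_bigr => j _.
by rewrite entry_lin -VpE addrC addKr.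
Qed.

Lemma P_z (z : P) : PP z = beta * \sum_(n < N) \sum_(j < N1) (pV z - Vp z) j n.
Proof. by rewrite -(zt1 z) P_zt mul1r zt1. Qed.

Lemma lip_g (z : P) : lipI (fun t => O (zt z t)).
Proof.
set D := pV z - Vp z.
pose a i n := ((pW z)^T *m Vp z) i n + pb2 z i 0.
pose c i n := ((pW z)^T *m D) i n.
apply: (@lipI_ext _ _ (fun t =>
  N%:R^-1 * (\sum_(n < N) \sum_(i < N0) (relu (a i n + t * c i n) - X i n) ^+ 2)
  + (lam1 * (\sum_(n < N) \sum_(j < N1) (Vp z j n + t * D j n)) + lam2 * frob2 (pW z))
  + beta * (\sum_(n < N) \sum_(j < N1) (0 + t * D j n)))).
  move=> t; rewrite /objO; congr (_ + _ + _).
  - rewrite /objF /zt /=; congr (_ * _); apply: eq_bigr => n _; apply: eq_bigr => i _.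
    by rewrite mulmxDr -scalemxAr entry_lin /a /c addrAC.
  - rewrite /objR /zt /=; congr (_ * _ + _); apply: eq_bigr => n _; apply: eq_bigr => j _.
    by rewrite entry_lin.
  - rewrite P_zt; congr (_ * _); rewrite mulr_sumr; apply: eq_bigr => n _.
    rewrite mulr_sumr; apply: eq_bigr => j _; by rewrite add0r.
apply: lipI_add; first apply: lipI_add.
- apply: lipI_scale; apply: lipI_sum => n; apply: lipI_sum => i; exact: lipI_sq.
- apply: lipI_add; last exact: lipI_const.
  apply: lipI_scale; apply: lipI_sum => n; apply: lipI_sum => j; exact: lipI_lin.
- apply: lipI_scale; apply: lipI_sum => n; apply: lipI_sum => j; exact: lipI_lin.
Qed.


Lemma sumsq_le (F : 'I_N -> 'I_N1 -> R) : (forall n j, 0 <= F n j) ->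
  \sum_(n < N) \sum_(j < N1) F n j ^+ 2 <= (\sum_(n < N) \sum_(j < N1) F n j) ^+ 2.
Proof.
move=> h; set S := \sum_(n < N) \sum_(j < N1) F n j.
have hle n j : F n j <= S.
  apply: (@le_trans _ _ (\sum_(j < N1) F n j)).
    by apply: (sum_ge_term (fun j => F n j)).
  apply: (sum_ge_term (fun n => \sum_(j < N1) F n j)) => m.
  by apply: sumr_ge0.
rewrite [X in _ <= X]expr2 {2}/S mulr_sumr; apply: ler_sum => n _.
rewrite mulr_sumr; apply: ler_sum => j _.
by rewrite expr2 mulrC; apply: ler_wpM2r => //.
Qed.

Lemma dist_zt (z : P) t : Omega2 X z -> 0 <= t <= 1 ->
  pdist (zt z t) z <= (1 - t) * \sum_(n < N) \sum_(j < N1) (pV z - Vp z) j n.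
Proof.
move=> h /andP[t0 t1].
set D := pV z - Vp z.
have S0 : 0 <= \sum_(n < N) \sum_(j < N1) D j n.
  by apply: sumr_ge0 => n _; apply: sumr_ge0 => j _; apply: D_ge0.
have u0 : 0 <= (1 - t) * \sum_(n < N) \sum_(j < N1) D j n by apply: mulr_ge0 => //; lra.
rewrite /pdist /zt /= !subrr !frob2_0 !add0r.
rewrite -(ger0_norm u0) -sqrtr_sqr; apply: ler_wsqrtr.
have -> : frob2 (Vp z + t *: D - pV z) = (1 - t) ^+ 2 * \sum_(n < N) \sum_(j < N1) D j n ^+ 2.
  rewrite /frob2 exchange_big /= mulr_sumr; apply: eq_bigr => n _.
  rewrite mulr_sumr; apply: eq_bigr => j _.
  rewrite mxsubE entry_lin /D mxsubE; ring.
rewrite exprMn; apply: ler_wpM2l; first exact: sqr_ge0.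
by apply: sumsq_le => n j; apply: D_ge0.
Qed.

Let C := 1 + N%:R * N1%:R * (M + 1) ^+ 2.

Lemma C_ge1 : 1 <= C.
Proof. rewrite /C lerDl; apply: mulr_ge0; [by rewrite mulr_ge0 | exact: sqr_ge0]. Qed.

Lemma dist_proj (z zb : P) : Omega1 X zb -> pdist (proj z) zb <= C * pdist z zb.
Proof.
move=> hb.
set d := pdist z zb.
set T := frob2 (pW z - pW zb) + frob2 (pb1 z - pb1 zb) + frob2 (pb2 z - pb2 zb)
         + frob2 (pV z - pV zb).
have T0 : 0 <= T by rewrite !addr_ge0 // frob2_ge0.
have d0 : 0 <= d by apply: sqrtr_ge0.
have dT : d ^+ 2 = T by rewrite /d /pdist sqr_sqrtr.
have fW := frob2_ge0 (pW z - pW zb); have fb1 := frob2_ge0 (pb1 z - pb1 zb).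
have fb2 := frob2_ge0 (pb2 z - pb2 zb); have fV := frob2_ge0 (pV z - pV zb).
have eW j i : `|(pW z - pW zb) j i| <= d.
  rewrite -sqrtr_sqr /d /pdist; apply: ler_wsqrtr.
  have := frob2_entry (pW z - pW zb) j i; lra.
have eb j : `|(pb1 z - pb1 zb) j 0| <= d.
  rewrite -sqrtr_sqr /d /pdist; apply: ler_wsqrtr.
  have := frob2_entry (pb1 z - pb1 zb) j 0; lra.
have eV n j : ((Vp z - pV zb) j n) ^+ 2 <= (d * (M + 1)) ^+ 2.
  rewrite mxsubE VpE (hb n j).
  have e1 : (pW z *m X) j n + pb1 z j 0 - ((pW zb *m X) j n + pb1 zb j 0)
      = ((pW z - pW zb) *m X) j n + (pb1 z - pb1 zb) j 0.
    by rewrite mulmxBl !mxsubE; ring.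
  have e2 : `|((pW z - pW zb) *m X) j n| <= d * M.
    rewrite mxE; apply: (le_trans (ler_norm_sum _ _ _)).
    apply: (@le_trans _ _ (\sum_i d * `|X i n|)).
      by apply: ler_sum => i _; rewrite normrM ler_wpM2r.
    by rewrite -mulr_sumr ler_wpM2l // colX_bound.
  have := relu_lip ((pW z *m X) j n + pb1 z j 0) ((pW zb *m X) j n + pb1 zb j 0).
  rewrite e1 => h1.
  have h2 := ler_normD (((pW z - pW zb) *m X) j n) ((pb1 z - pb1 zb) j 0).
  have h3 := eb j.
  set x := relu _ - relu _ in h1 *.
  have hx : `|x| <= d * (M + 1) by rewrite mulrDr mulr1; lra.
  move: hx; rewrite ler_norml => /andP[hx1 hx2].
  have hM := M_ge0.
  have : 0 <= d * (M + 1) by apply: mulr_ge0 => //; lra.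
  nra.
have hV : frob2 (Vp z - pV zb) <= N%:R * (N1%:R * (d * (M + 1)) ^+ 2).
  rewrite /frob2 exchange_big /= -sum_const_ord; apply: ler_sum => n _.
  rewrite -sum_const_ord; apply: ler_sum => j _; exact: eV.
rewrite /pdist /proj /= -/d.
have hC := C_ge1.
have Cd0 : 0 <= C * d by apply: mulr_ge0 => //; lra.
rewrite -(ger0_norm Cd0) -sqrtr_sqr; apply: ler_wsqrtr.
set K := N%:R * N1%:R * (M + 1) ^+ 2.
have K0 : 0 <= K by apply: mulr_ge0; [by rewrite mulr_ge0 | exact: sqr_ge0].
have eC : C = 1 + K by [].
have hV' : frob2 (Vp z - pV zb) <= K * d ^+ 2.
  by move: hV; have -> : N%:R * (N1%:R * (d * (M + 1)) ^+ 2) = K * d ^+ 2 by rewrite /K; ring.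
have : (C * d) ^+ 2 - (d ^+ 2 + K * d ^+ 2) = K * (1 + K) * d ^+ 2 by rewrite eC; ring.
have : 0 <= K * (1 + K) * d ^+ 2.
  apply: mulr_ge0; [apply: mulr_ge0 => //; lra | exact: sqr_ge0].
move: dT; rewrite /T => dT.
lra.
Qed.


Lemma part_R LF LR :
  @lipschitz_on R N N0 N1 FF (Omega_theta X lam1 lam2 beta theta) LF ->
  lipschitz_on RR (Omega_theta X lam1 lam2 beta theta) LR ->
  LF + LR < beta -> forall zb : P, Omega_theta X lam1 lam2 beta theta zb ->
  local_min (fun z => FF z + RR z) (Omega1 X) zb -> local_min O (Omega2 X) zb.
Proof.
move=> [LF0 hLF] [LR0 hLR] hb zb [hb2 hbO] [hb1 [eps [e0 he]]].
split=> //; have hC := C_ge1.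
exists (eps / C); split; first by rewrite divr_gt0 //; lra.
move=> z hz hd; case: (leP (O z) theta) => hOz; last by apply: le_trans hbO (ltW hOz).
have hOzb : O zb = FF zb + RR zb by rewrite /objO P_Omega1 // addr0.
have hpr : FF zb + RR zb <= FF (proj z) + RR (proj z).
  apply: he; first exact: proj_Omega1.
  apply: le_lt_trans (dist_proj z hb1) _.
  have -> : eps = C * (eps / C) by rewrite mulrC divfK // gt_eqF //; lra.
  by rewrite ltr_pM2l //; lra.
have hg0 : O (zt z 0) = FF (proj z) + RR (proj z).
  by rewrite zt0 /objO P_Omega1 ?addr0 //; exact: proj_Omega1.
have chain : forall t, 0 <= t <= 1 -> O (zt z t) <= theta -> O (zt z t) <= O z.
  move=> t ht hgt; have /andP[t0 t1] := ht.
  have Ot : Omega_theta X lam1 lam2 beta theta (zt z t) by split => //; apply: zt_Omega2.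
  have Oz : Omega_theta X lam1 lam2 beta theta z by [].
  have h1 := hLF _ _ Ot Oz; have h2 := hLR _ _ Ot Oz.
  have hd' := dist_zt hz ht.
  have hP1 := P_zt z t; have hP2 := P_z z.
  set S := \sum_(n < N) \sum_(j < N1) (pV z - Vp z) j n in hd' hP1 hP2.
  have S0 : 0 <= S by apply: sumr_ge0 => n _; apply: sumr_ge0 => j _; apply: D_ge0.
  move: h1 h2; rewrite !ler_norml => /andP[_ h1] /andP[_ h2].
  have h3 : LF * pdist (zt z t) z <= LF * ((1 - t) * S) by apply: ler_wpM2l.
  have h4 : LR * pdist (zt z t) z <= LR * ((1 - t) * S) by apply: ler_wpM2l.
  have u0 : 0 <= (1 - t) * S by apply: mulr_ge0 => //; lra.
  have h5 : (LF + LR) * ((1 - t) * S) <= beta * ((1 - t) * S).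
    by apply: ler_wpM2r => //; apply: ltW.
  move: hgt; rewrite /objO hP1 hP2 => hgt.
  lra.
have g1 : O (zt z 1) = O z by rewrite zt1.
case: (sup_arg (g := fun t => O (zt z t)) (lip_g z) g1 hOz chain) => h.
  rewrite hOzb; apply: le_trans hpr _; rewrite -hg0; apply: chain => //.
  by rewrite lexx ler01.
exact: le_trans hbO h.
Qed.

End Main.

Theorem corollary2p1 (R : realType) (N N0 N1 : nat)
  (X : 'M[R]_(N0, N)) (lam1 lam2 beta theta LF LR : R) :
  (0 < N)%N -> (0 < N0)%N -> (0 < N1)%N ->
  0 < lam1 -> 0 < lam2 -> 0 < beta ->
  N%:R^-1 * frob2 X < theta ->
  @lipschitz_on R N N0 N1 (objF X) (Omega_theta X lam1 lam2 beta theta) LF ->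
  @lipschitz_on R N N0 N1 (@objR R N N0 N1 lam1 lam2) (Omega_theta X lam1 lam2 beta theta) LR ->
  LF + LR < beta ->
  (forall zb : param R N N0 N1, Omega_theta X lam1 lam2 beta theta zb ->
     (local_min (fun z => objF X z + @objR R N N0 N1 lam1 lam2 z) (Omega1 X) zb \/
      local_min (objO X lam1 lam2 beta) (Zset X lam1 lam2 theta) zb) ->
     local_min (objO X lam1 lam2 beta) (Omega2 X) zb) /\
  (forall zb : param R N N0 N1,
     Omega_theta X lam1 lam2 beta theta zb -> Omega3 X lam1 lam2 theta zb ->
     local_min (objO X lam1 lam2 beta) (Omega2 X) zb ->
     local_min (objO X lam1 lam2 beta) (Zset X lam1 lam2 theta) zb).
Proof.
move=> hN hN0 hN1 l1 l2 b0 hth hLF hLR hb; split.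
- move=> zb hzb [h|h].
  + by apply: (part_R hN hLF hLR hb hzb h).
  + by apply: (part_LRP hN hN0 hN1 l1 l2 b0 hth hzb h).
- move=> zb hzb h3 [h2 [eps [e0 he]]]; split; first by [].
  exists eps; split=> // z [hz _] hd; exact: he.
Qed.
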